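(* For every point of $\mathbb{R}^8$ and every $\mathfrak{g}$-valued $2$-form $\varphi \in \Lambda^2_+\mathbb{R}^8\otimes\mathfrak{g}$ at that point, \[\sum_{k,l=1}^8 e_k \wedge [F_B(e_k,e_l), i_{e_l}\varphi] \in \Lambda^2_+\mathbb{R}^8 \otimes \mathfrak{g},\] where $F_B$ is the curvature of the connection $B$ described in the context and the bracket is the Lie bracket of $\mathfrak{g}$.
   Context: Write $\mathbb{R}^8 = E \oplus E^\perp$ with orthonormal basis $e_1,\dots,e_4$ of $E$ and $e_1^\perp,\dots,e_4^\perp$ of $E^\perp$; set $e_5=e_1^\perp,\dots,e_8=e_4^\perp$; vectors are identified with covectors via the Euclidean metric; coordinates are $(x,y)$ with $x\in E$ and $y=\sum_k y_k e_k^\perp \in E^\perp$. The $4$-form $\Omega$ is $\Omega = -e_1 e_2 e_1^\perp e_2^\perp - e_1 e_2 e_3^\perp e_4^\perp - e_3 e_4 e_1^\perp e_2^\perp - e_3 e_4 e_3^\perp e_4^\perp + e_1 e_3 e_2^\perp e_4^\perp - e_1 e_3 e_1^\perp e_3^\perp - e_2 e_4 e_2^\perp e_4^\perp + e_2 e_4 e_1^\perp e_3^\perp - e_1 e_4 e_2^\perp e_3^\perp - e_1 e_4 e_1^\perp e_4^\perp - e_2 e_3 e_2^\perp e_3^\perp - e_2 e_3 e_1^\perp e_4^\perp + e_1 e_2 e_3 e_4 + e_1^\perp e_2^\perp e_3^\perp e_4^\perp$ (juxtaposition = wedge). With $*$ the Euclidean Hodge star (orientation $e_1\wedge\dots\wedge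 e_4\wedge e_1^\perp\wedge\dots\wedge e_4^\perp$), $\Lambda^2_+\mathbb{R}^8 = \{\varphi: 3\varphi - *(\Omega\wedge\varphi)=0\}$. Let $\mathfrak{g}\subset \mathfrak{so}(E^\perp)$ be the Lie algebra spanned by $\mathfrak{i},\mathfrak{j},\mathfrak{k}$, where $\mathfrak{i}(e_1^\perp)=-e_2^\perp, \mathfrak{i}(e_2^\perp)=e_1^\perp, \mathfrak{i}(e_3^\perp)=e_4^\perp, \mathfrak{i}(e_4^\perp)=-e_3^\perp$; $\mathfrak{j}(e_1^\perp)=-e_3^\perp, \mathfrak{j}(e_2^\perp)=-e_4^\perp, \mathfrak{j}(e_3^\perp)=e_1^\perp, \mathfrak{j}(e_4^\perp)=e_2^\perp$; $\mathfrak{k}(e_1^\perp)=-e_4^\perp, \mathfrak{k}(e_2^\perp)=e_3^\perp, \mathfrak{k}(e_3^\perp)=-e_2^\perp, \mathfrak{k}(e_4^\perp)=e_1^\perp$. Fix $\varepsilon>0$. $B$ is the $\mathfrak{g}$-valued $1$-form (connection $d+B$) on $\mathbb{R}^8$ with $B(e_i)=0$ for $1\le i\le 4$ and $B(e_1^\perp)=\frac{-y_2\mathfrak{i}-y_3\mathfrak{j}-y_4\mathfrak{k}}{\varepsilon^2+|y|^2}$, $B(e_2^\perp)=\frac{y_1\mathfrak{i}-y_4\mathfrak{j}+y_3\mathfrak{k}}{\varepsilon^2+|y|^2}$, $B(e_3^\perp)=\frac{y_4\mathfrak{i}+y_1\mathfrak{j}-y_2\mathfrak{k}}{\varepsilon^2+|y|^2}$,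 $B(e_4^\perp)=\frac{-y_3\mathfrak{i}+y_2\mathfrak{j}+y_1\mathfrak{k}}{\varepsilon^2+|y|^2}$. Its curvature is $F_B = dB + \frac12[B\wedge B]$, a $\mathfrak{g}$-valued $2$-form. *)

(* Defs.v *)
From HB Require Import structures.
From mathcomp Require Import all_boot all_order all_algebra.
From mathcomp Require Import all_classical all_reals all_analysis.
Set Implicit Arguments. Unset Strict Implicit. Unset Printing Implicit Defensive.
Import Order.TTheory GRing.Theory Num.Theory.
Local Open Scope ring_scope.

Section Defs.
Variable R : realType.

(* Points of R^8 = E (+) E^perp : coordinates w.r.t. e_1..e_4, e_1^perp..e_4^perp,
   i.e. indices 0..7 (index 4+c-1 is e_c^perp). *)
Definition pt8 := 'I_8 -> R.

(* ---------- exterior algebra of R^8, valued in an R-module V ----------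
   A xform is given by its coefficients on the basis e_I = e_{i1}^...^e_{ik},
   I = {i1 < ... < ik}. *)
Definition xform (V : lmodType R) := {set 'I_8} -> V.

Definition ninv (I J : {set 'I_8}) : nat :=
  #|[set p : 'I_8 * 'I_8 | (p.1 \in I) && (p.2 \in J) && (p.2 < p.1)%N]|.
Definition sgn (I J : {set 'I_8}) : R := (-1) ^+ ninv I J.

Definition wedge (V : lmodType R) (a : xform R^o) (b : xform V) : xform V :=
  fun K => \sum_(I : {set 'I_8}) \sum_(J : {set 'I_8})
    (if [disjoint I & J] && (I :|: J == K) then (sgn I J * a I) *: b J else 0).

Definition ebasis (k : 'I_8) : xform R^o := fun I => if I == [set k] then 1 else 0.

(* Euclidean Hodge star, orientation e_1^...^e_8:  * e_K = (-1)^{inv(K, ~K)} e_{~K},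
   so that e_K ^ * e_K = e_1^...^e_8 *)
Definition hodge (V : lmodType R) (g : xform V) : xform V :=
  fun I => sgn (~: I) I *: g (~: I).

Definition interior (V : lmodType R) (l : 'I_8) (w : xform V) : xform V :=
  fun J => if l \in J then 0 else sgn [set l] J *: w (l |: J).

Definition e4 (a b c d : nat) : xform R^o :=
  wedge (ebasis (inord a)) (wedge (ebasis (inord b))
    (wedge (ebasis (inord c)) (ebasis (inord d)))).

Definition Omega : xform R^o := fun I =>
  (- e4 0 1 4 5 I - e4 0 1 6 7 I - e4 2 3 4 5 I - e4 2 3 6 7 I
   + e4 0 2 5 7 I - e4 0 2 4 6 I - e4 1 3 5 7 I + e4 1 3 4 6 I
   - e4 0 3 5 6 I - e4 0 3 4 7 I - e4 1 2 5 6 I - e4 1 2 4 7 I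
   + e4 0 1 2 3 I + e4 4 5 6 7 I).

(* ---------- the Lie algebra g inside so(E^perp) = 4x4 matrices ----------
   convention: M i j = coefficient of e_{i+1}^perp in M(e_{j+1}^perp) *)
Definition mx4 (f : nat -> nat -> R) : 'M[R]_4 := \matrix_(i < 4, j < 4) f i j.

Definition gi : 'M[R]_4 := mx4 (fun i j =>
  match i, j with 1%N, 0%N => -1 | 0%N, 1%N => 1 | 3%N, 2%N => 1 | 2%N, 3%N => -1 | _, _ => 0 end).
Definition gj : 'M[R]_4 := mx4 (fun i j =>
  match i, j with 2%N, 0%N => -1 | 3%N, 1%N => -1 | 0%N, 2%N => 1 | 1%N, 3%N => 1 | _, _ => 0 end).
Definition gk : 'M[R]_4 := mx4 (fun i j =>
  match i, j with 3%N, 0%N => -1 | 2%N, 1%N => 1 | 1%N, 2%N => -1 | 0%N, 3%N => 1 | _, _ => 0 end).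

Definition in_g (A : 'M[R]_4) : Prop :=
  exists a b c : R, A = a *: gi + b *: gj + c *: gk.

Definition lie (A C : 'M[R]_4) : 'M[R]_4 := A *m C - C *m A.

Definition in_L2plus_g (phi : xform 'M[R]_4) : Prop :=
  (forall I : {set 'I_8}, #|I| != 2%N -> phi I = 0) /\
  (forall I : {set 'I_8}, in_g (phi I)) /\
  (forall I : {set 'I_8}, 3%:R *: phi I - hodge (wedge Omega phi) I = 0).

Definition ycoord (p : pt8) (c : nat) : R := p (inord (4 + c)).
Definition ynorm2 (p : pt8) : R := \sum_(c < 4) ycoord p c ^+ 2.

Definition Bc (eps : R) (a : 'I_8) (p : pt8) : 'M[R]_4 :=
  let y1 := ycoord p 0 in let y2 := ycoord p 1 in
  let y3 := ycoord p 2 in let y4 := ycoord p 3 in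
  (eps ^+ 2 + ynorm2 p)^-1 *:
  match nat_of_ord a with
  | 4%N => - y2 *: gi - y3 *: gj - y4 *: gk
  | 5%N => y1 *: gi - y4 *: gj + y3 *: gk
  | 6%N => y4 *: gi + y1 *: gj - y2 *: gk
  | 7%N => - y3 *: gi + y2 *: gj + y1 *: gk
  | _ => 0
  end.

Definition shift (p : pt8) (k : 'I_8) (t : R) : pt8 :=
  fun a => p a + (if a == k then t else 0).
Definition pd (k : 'I_8) (f : pt8 -> 'M[R]_4) (p : pt8) : 'M[R]_4 :=
  \matrix_(i < 4, j < 4) derive1 (fun t : R => f (shift p k t) i j) 0.

Definition dB (eps : R) (k l : 'I_8) (p : pt8) : 'M[R]_4 :=
  pd k (Bc eps l) p - pd l (Bc eps k) p.
Definition BwB (eps : R) (k l : 'I_8) (p : pt8) : 'M[R]_4 :=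
  lie (Bc eps k p) (Bc eps l p) - lie (Bc eps l p) (Bc eps k p).
Definition FB (eps : R) (k l : 'I_8) (p : pt8) : 'M[R]_4 :=
  dB eps k l p + 2%:R^-1 *: BwB eps k l p.

Definition Tphi (eps : R) (p : pt8) (phi : xform 'M[R]_4) : xform 'M[R]_4 :=
  fun K => \sum_(k < 8) \sum_(l < 8)
    wedge (ebasis k) (fun J => lie (FB eps k l p) (interior l phi J)) K.

End Defs.

(* Main.v *)
Require Import Defs.
From HB Require Import structures.
From mathcomp Require Import all_boot all_order all_algebra.
From mathcomp Require Import all_classical all_reals all_analysis.
Local Open Scope ring_scope.

From Stdlib Require Import PeanoNat.
From mathcomp Require Import ring lra.
Set Implicit Arguments. Unset Strict Implicit. Unset Printing Implicit Defensive.
Import Order.TTheory GRing.Theory Num.Theory.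


Definition p2 (k : nat) : nat := Nat.pow 2 k.
Definition bs (m : nat) : {set 'I_8} := [set i : 'I_8 | Nat.testbit m i].

Lemma in_bs m (i : 'I_8) : (i \in bs m) = Nat.testbit m i.
Proof. by rewrite inE. Qed.

Lemma eqb_eqn (a b : nat) : Nat.eqb a b = (a == b)%N.
Proof. by case: (Nat.eqb_spec a b) => [->|/eqP/negbTE ->]; rewrite ?eqxx. Qed.

Lemma set1_bs (i : 'I_8) : [set i] = bs (p2 i).
Proof. by apply/setP => j; rewrite !inE /p2 Nat.pow2_bits_eqb eqb_eqn eq_sym. Qed.

Lemma setD1_bs m (i : 'I_8) : bs m :\ i = bs (Nat.ldiff m (p2 i)).
Proof.
apply/setP => j; rewrite !inE Nat.ldiff_spec /p2 Nat.pow2_bits_eqb eqb_eqn.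
by rewrite andbC eq_sym.
Qed.

Lemma setU1_bs m (i : 'I_8) : i |: bs m = bs (Nat.lor (p2 i) m).
Proof.
apply/setP => j; rewrite !inE Nat.lor_spec /p2 Nat.pow2_bits_eqb eqb_eqn.
by rewrite eq_sym.
Qed.

Lemma tb255 (i : 'I_8) : Nat.testbit 255 i = true.
Proof. by case: i => [[|[|[|[|[|[|[|[|i]]]]]]]] Hi]. Qed.

Lemma setC_bs m : ~: bs m = bs (Nat.lxor m 255).
Proof.
apply/setP => j; rewrite !inE Nat.lxor_spec tb255.
by case: (Nat.testbit m j).
Qed.

Lemma setU_bs m n : bs m :|: bs n = bs (Nat.lor m n).
Proof. by apply/setP => j; rewrite !inE Nat.lor_spec. Qed.

Lemma setD_bs m n : bs m :\: bs n = bs (Nat.ldiff m n).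
Proof. by apply/setP => j; rewrite !inE Nat.ldiff_spec andbC. Qed.

Definition subN (S n : nat) : bool :=
  all (fun i => ~~ Nat.testbit S i || Nat.testbit n i) (iota 0 8).

Lemma subset_bs S n : (bs S \subset bs n) = subN S n.
Proof.
apply/idP/idP => [/fintype.subsetP H | /allP H]; [apply/allP => i | apply/fintype.subsetP => i].
  rewrite mem_iota add0n => /andP [_ hi].
  have := H (Ordinal hi); rewrite !in_bs /=.
  by case: (Nat.testbit S i) => // ->.
rewrite !in_bs => hS.
have := H i; rewrite mem_iota add0n ltn_ord hS /=.
by move=> ->.
Qed.

Lemma bs_land m : bs m = bs (Nat.land m 255).
Proof. by apply/setP => j; rewrite !inE Nat.land_spec tb255 andbT. Qed.

Lemma land255_lt m : (Nat.land m 255 < 256)%N.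
Proof.
rewrite ltnS; apply/ssrnat.leP; exact: Nat.land_le_r.
Qed.

Lemma bs_surj (I : {set 'I_8}) : exists2 m, (m < 256)%N & I = bs m.
Proof.
suff [m ->] : exists m, I = bs m.
  by exists (Nat.land m 255); [exact: land255_lt | exact: bs_land].
have -> : I = [set x in enum I] by apply/setP => x; rewrite !inE mem_enum.
elim: (enum I) => [|x s [m Hm]].
  by exists 0%N; apply/setP => x; rewrite !inE Nat.bits_0.
exists (Nat.lor (p2 x) m); rewrite -setU1_bs -Hm.
by apply/setP => y; rewrite !inE.
Qed.

Definition ninvN (m n : nat) : nat :=
  foldr (fun a acc => (foldr (fun b acc' =>
     ((Nat.testbit m a && Nat.testbit n b && (b < a)%N) : nat) + acc')%N 0%N (iota 0 8) + acc)%N) 0%N (iota 0 8).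

Lemma sum_foldr (T : Type) (s : seq T) (F : T -> nat) (a : nat) :
  (\sum_(x <- s) F x + a)%N = foldr (fun x acc => F x + acc)%N a s.
Proof. elim: s => [|x s IH]; first by rewrite big_nil. by rewrite big_cons -addnA IH. Qed.

Lemma sum8 (F : nat -> nat) : (\sum_(a < 8) F a)%N = foldr (fun a acc => F a + acc)%N 0%N (iota 0 8).
Proof. by rewrite -(big_mkord xpredT) /index_iota subn0 -[LHS]addn0 sum_foldr. Qed.

Lemma ninv_bs m n : ninv (bs m) (bs n) = ninvN m n.
Proof.
rewrite /ninv -sum1dep_card big_mkcond /=.
rewrite -(pair_bigA _ (fun (a b : 'I_8) => if (a \in bs m) && (b \in bs n) && (b < a)%N then 1%N else 0%N)) /=.
under eq_bigr => a _ do under eq_bigr => b _ do rewrite !in_bs.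
rewrite (sum8 (fun a => \sum_(j < 8) (if Nat.testbit m a && Nat.testbit n j && (j < a)%N then 1%N else 0%N))%N).
rewrite /ninvN; congr foldr; apply/funext => a; apply/funext => acc.
by rewrite (sum8 (fun j => (if Nat.testbit m a && Nat.testbit n j && (j < a)%N then 1%N else 0%N))).
Qed.

Definition sgnZ (m n : nat) : int := if odd (ninvN m n) then -1 else 1.

Lemma sgn_bs (R : realType) m n : sgn R (bs m) (bs n) = (sgnZ m n)%:~R.
Proof.
rewrite /sgn ninv_bs /sgnZ -signr_odd.
by case: (odd _); rewrite ?expr1 ?expr0 ?intrN.
Qed.

Definition ind (R : realType) (S : {set 'I_8}) (c : R) : xform R^o :=
  fun I => if I == S then c else 0.

Lemma wedge_ind (R : realType) (V : lmodType R) (S : {set 'I_8}) (c : R) (b : xform V) K :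
  wedge (ind S c) b K =
  if S \subset K then (sgn R S (K :\: S) * c) *: b (K :\: S) else 0.
Proof.
rewrite /wedge (bigD1 S) //= [X in _ + X]big1; last first.
  move=> I nI; apply: big1 => J _; rewrite /ind (negbTE nI) mulr0 scale0r.
  by case: ifP.
rewrite /ind eqxx addr0.
case: ifP => sub.
  have dis : [disjoint S & K :\: S].
    by rewrite -setI_eq0; apply/eqP/setP => x; rewrite !inE; case: (x \in S); rewrite ?andbF.
  have U : S :|: K :\: S = K.
    apply/setP => x; rewrite !inE; case xS: (x \in S) => //=.
    by rewrite (fintype.subsetP sub).
  rewrite (bigD1 (K :\: S)) //= dis U eqxx /= big1 ?addr0 // => J neJ.
  case: ifP => // /andP [dJ /eqP UJ]; exfalso; move/negP: neJ; apply.
  rewrite -UJ; apply/eqP/setP => x; rewrite !inE.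
  case xJ: (x \in J); case xS: (x \in S) => //=.
  by move: dJ; rewrite -setI_eq0 => /eqP/setP/(_ x); rewrite !inE xJ xS.
apply: big1 => J _; case: ifP => // /andP [_ /eqP UJ].
by move: sub; rewrite -UJ finset.subsetUl.
Qed.

Lemma wedge_ebasis (R : realType) (V : lmodType R) (k : 'I_8) (b : xform V) K :
  wedge (ebasis R k) b K =
  if k \in K then sgn R [set k] (K :\ k) *: b (K :\ k) else 0.
Proof.
have -> : ebasis R k = ind [set k] 1 by [].
by rewrite wedge_ind finset.sub1set mulr1.
Qed.

Lemma wedge_lin (R : realType) (V W : lmodType R) (f : V -> W) (a : xform R^o) (b : xform V) K :
  f 0 = 0 -> (forall x y, f (x + y) = f x + f y) -> (forall (r : R) x, f (r *: x) = r *: f x) ->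
  wedge a (fun J => f (b J)) K = f (wedge a b K).
Proof.
move=> f0 fD fZ; rewrite /wedge (big_morph f fD f0); apply: eq_bigr => I _.
rewrite (big_morph f fD f0); apply: eq_bigr => J _.
by case: ifP => _; rewrite ?fZ ?f0.
Qed.

Lemma wedge_suml (R : realType) (V : lmodType R) (T : Type) (s : seq T)
   (a : T -> xform R^o) (b : xform V) K :
  wedge (fun I => \sum_(t <- s) a t I) b K = \sum_(t <- s) wedge (a t) b K.
Proof.
rewrite /wedge; symmetry; rewrite exchange_big; apply: eq_bigr => I _.
rewrite exchange_big; apply: eq_bigr => J _.
case: ifP => _; last by rewrite big1.
by rewrite mulr_sumr scaler_suml.
Qed.

Lemma wedge_scalel (R : realType) (V : lmodType R) (r : R) (a : xform R^o) (b : xform V) K :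
  wedge (fun I => r * a I) b K = r *: wedge a b K.
Proof.
rewrite /wedge scaler_sumr; apply: eq_bigr => I _.
rewrite scaler_sumr; apply: eq_bigr => J _.
by case: ifP => _; rewrite ?scaler0 // scalerA mulrCA.
Qed.

Lemma wedge_eb_ind (R : realType) (k : 'I_8) (S : {set 'I_8}) (v : R) : k \notin S ->
  wedge (ebasis R k) (ind S v) = ind (k |: S) (sgn R [set k] S * v).
Proof.
move=> kS; apply/funext => K; rewrite wedge_ebasis /ind.
case kK: (k \in K).
  have E : (K :\ k == S) = (K == k |: S).
    apply/eqP/eqP => [<-|->]; first by rewrite finset.setD1K.
    by rewrite finset.setU1K.
  rewrite E; case: eqP => [->|_]; last by rewrite scaler0.
  by rewrite finset.setU1K.
case: eqP => [eK|_] //; by move: kK; rewrite eK finset.setU11.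
Qed.

Definition e4m (a b c d : nat) : nat := Nat.lor (p2 a) (Nat.lor (p2 b) (Nat.lor (p2 c) (p2 d))).
Definition e4s (a b c d : nat) : int :=
  sgnZ (p2 a) (Nat.lor (p2 b) (Nat.lor (p2 c) (p2 d))) *
  (sgnZ (p2 b) (Nat.lor (p2 c) (p2 d)) * (sgnZ (p2 c) (p2 d) * 1)).
Definition e4ok (a b c d : nat) : bool :=
  [&& (a < 8)%N, (b < 8)%N, (c < 8)%N, (d < 8)%N, ~~ Nat.testbit (p2 d) c,
      ~~ Nat.testbit (Nat.lor (p2 c) (p2 d)) b &
      ~~ Nat.testbit (Nat.lor (p2 b) (Nat.lor (p2 c) (p2 d))) a].

Lemma e4E (R : realType) a b c d : e4ok a b c d ->
  e4 R a b c d = ind (bs (e4m a b c d)) ((e4s a b c d)%:~R).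
Proof.
move=> /andP[ha /andP[hb /andP[hc /andP[hd /andP[nc /andP[nb na]]]]]].
rewrite /e4.
have -> : ebasis R (inord d) = ind [set inord d] 1 by [].
rewrite wedge_eb_ind; last by rewrite set1_bs in_bs !inordK.
rewrite wedge_eb_ind; last by rewrite !set1_bs setU_bs in_bs !inordK.
rewrite wedge_eb_ind; last by rewrite !set1_bs !setU_bs in_bs !inordK.
by rewrite !set1_bs !setU_bs !sgn_bs !inordK // /e4s /e4m !intrM.
Qed.

Definition mkO (s : int) (a b c d : nat) : int * (nat * nat * nat * nat) := (s, (a, b, c, d)).
Arguments mkO s%_R (a b c d)%_N.
Definition OmT : seq (int * (nat * nat * nat * nat)) :=
  [:: mkO (-1) 0 1 4 5; mkO (-1) 0 1 6 7; mkO (-1) 2 3 4 5; mkO (-1) 2 3 6 7;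
      mkO 1 0 2 5 7; mkO (-1) 0 2 4 6; mkO (-1) 1 3 5 7; mkO 1 1 3 4 6;
      mkO (-1) 0 3 5 6; mkO (-1) 0 3 4 7; mkO (-1) 1 2 5 6; mkO (-1) 1 2 4 7;
      mkO 1 0 1 2 3; mkO 1 4 5 6 7].

Definition tm (t : int * (nat * nat * nat * nat)) : nat :=
  e4m t.2.1.1.1 t.2.1.1.2 t.2.1.2 t.2.2.
Definition ts (t : int * (nat * nat * nat * nat)) : int :=
  t.1 * e4s t.2.1.1.1 t.2.1.1.2 t.2.1.2 t.2.2.
Definition tok (t : int * (nat * nat * nat * nat)) : bool :=
  e4ok t.2.1.1.1 t.2.1.1.2 t.2.1.2 t.2.2.

Lemma OmT_ok : all tok OmT.
Proof. by vm_compute. Qed.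

Lemma OmegaF (R : realType) :
  Omega R = fun I => \sum_(t <- OmT) (ts t)%:~R * ind (bs (tm t)) 1 I.
Proof.
apply/funext => I.
have -> : \sum_(t <- OmT) (ts t)%:~R * ind (bs (tm t)) 1 I =
          \sum_(t <- OmT) (t.1)%:~R * e4 R t.2.1.1.1 t.2.1.1.2 t.2.1.2 t.2.2 I.
  rewrite big_seq [RHS]big_seq; apply: eq_bigr => t tin.
  rewrite e4E; last by move/allP: OmT_ok; apply.
  by rewrite /ts /tm intrM /ind; case: ifP; rewrite ?mulr0 ?mulr1.
rewrite /Omega; move: (e4 R) => f.
rewrite /OmT !big_cons big_nil /=.
ring.
Qed.

Definition Pop (R : realType) (V : lmodType R) (psi : xform V) (I : {set 'I_8}) : V :=
  3%:R *: psi I - hodge (wedge (Omega R) psi) I.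

Definition evalP (R : realType) (V : lmodType R) (f : nat -> V) (L : seq (int * nat)) : V :=
  \sum_(t <- L) (t.1)%:~R *: f t.2.

Definition popL (m : nat) : seq (int * nat) :=
  (3%:Z, m) :: [seq (- sgnZ (Nat.lxor m 255) m * (ts t * sgnZ (tm t) (Nat.ldiff (Nat.lxor m 255) (tm t))),
                    Nat.ldiff (Nat.lxor m 255) (tm t))
                 | t <- OmT & subN (tm t) (Nat.lxor m 255)].

Lemma wedge_Omega (R : realType) (V : lmodType R) (b : xform V) m :
  wedge (Omega R) b (bs m) =
  \sum_(t <- OmT) (if subN (tm t) m then
       ((ts t * sgnZ (tm t) (Nat.ldiff m (tm t)))%:~R) *: b (bs (Nat.ldiff m (tm t))) else 0).
Proof.
rewrite OmegaF wedge_suml; apply: eq_bigr => t _.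
rewrite wedge_scalel wedge_ind subset_bs setD_bs sgn_bs.
by case: ifP => _; rewrite ?scaler0 // scalerA mulr1 intrM.
Qed.

Lemma popE (R : realType) (V : lmodType R) (psi : xform V) m :
  Pop psi (bs m) = evalP (fun n => psi (bs n)) (popL m).
Proof.
rewrite /Pop /hodge setC_bs wedge_Omega /evalP /popL [in RHS]big_cons.
rewrite [in RHS]big_map [in RHS]big_filter [in RHS]big_mkcond /=.
congr (_ + _); rewrite sgn_bs scaler_sumr -sumrN; apply: eq_bigr => t _.
case: ifP => _; rewrite ?scaler0 ?oppr0 //.
rewrite scalerA -scaleNr; congr (_ *: _); by rewrite [RHS]intrM intrN mulNr.
Qed.

Lemma lieDr (R : realType) (A B C : 'M[R]_4) : lie A (B + C) = lie A B + lie A C.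
Proof. by rewrite /lie mulmxDr mulmxDl opprD addrACA. Qed.
Lemma lieDl (R : realType) (A B C : 'M[R]_4) : lie (B + C) A = lie B A + lie C A.
Proof. by rewrite /lie mulmxDr mulmxDl opprD addrACA. Qed.
Lemma lieZr (R : realType) (A B : 'M[R]_4) (r : R) : lie A (r *: B) = r *: lie A B.
Proof. by rewrite /lie -scalemxAl -scalemxAr scalerBr. Qed.
Lemma lieZl (R : realType) (A B : 'M[R]_4) (r : R) : lie (r *: B) A = r *: lie B A.
Proof. by rewrite /lie -scalemxAl -scalemxAr scalerBr. Qed.
Lemma lie0r (R : realType) (A : 'M[R]_4) : lie A 0 = 0.
Proof. by rewrite /lie mulmx0 mul0mx subrr. Qed.
Lemma lie0l (R : realType) (A : 'M[R]_4) : lie 0 A = 0.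
Proof. by rewrite /lie mulmx0 mul0mx subrr. Qed.
Lemma lie_suml (R : realType) (I : Type) (s : seq I) (P : pred I) (F : I -> 'M[R]_4) (A : 'M[R]_4) :
  lie (\sum_(i <- s | P i) F i) A = \sum_(i <- s | P i) lie (F i) A.
Proof. exact: (big_morph (fun B => lie B A) (fun x y => lieDl A x y) (lie0l A)). Qed.
Lemma lie_sumr (R : realType) (I : Type) (s : seq I) (P : pred I) (F : I -> 'M[R]_4) (A : 'M[R]_4) :
  lie A (\sum_(i <- s | P i) F i) = \sum_(i <- s | P i) lie A (F i).
Proof. exact: (big_morph (fun B => lie A B) (fun x y => lieDr A x y) (lie0r A)). Qed.

Definition Ta (R : realType) (a : nat) : 'M[R]_4 :=
  match a with 0%N => gi R | 1%N => gj R | _ => gk R end.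

Definition mkG (k l a : nat) (s : int) : nat * nat * nat * int := (k, l, a, s).
Arguments mkG (k l a)%_N s%_R.
Definition Glist : seq (nat * nat * nat * int) :=
  [:: mkG 4 5 0 1; mkG 5 4 0 (-1); mkG 4 6 1 1; mkG 6 4 1 (-1); mkG 4 7 2 1; mkG 7 4 2 (-1);
      mkG 5 6 2 (-1); mkG 6 5 2 1; mkG 5 7 1 1; mkG 7 5 1 (-1); mkG 6 7 0 (-1); mkG 7 6 0 1].

Lemma Glist_ok : all (fun t => (t.1.1.1 < 8)%N && (t.1.1.2 < 8)%N) Glist.
Proof. by []. Qed.

Definition G (R : realType) (k l : 'I_8) : 'M[R]_4 :=
  \sum_(t <- Glist | (t.1.1.1 == k) && (t.1.1.2 == l)) (t.2)%:~R *: Ta R t.1.2.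

Definition TopG (R : realType) (Gm : 'I_8 -> 'I_8 -> 'M[R]_4) (phi : xform 'M[R]_4)
  (K : {set 'I_8}) : 'M[R]_4 :=
  \sum_(k < 8) \sum_(l < 8) wedge (ebasis R k) (fun J => lie (Gm k l) (Defs.interior l phi J)) K.

Definition topL (m : nat) : seq (int * nat * nat) :=
  [seq (t.2 * sgnZ (p2 t.1.1.1) (Nat.ldiff m (p2 t.1.1.1)) * sgnZ (p2 t.1.1.2) (Nat.ldiff m (p2 t.1.1.1)),
        t.1.2, Nat.lor (p2 t.1.1.2) (Nat.ldiff m (p2 t.1.1.1)))
  | t <- Glist & Nat.testbit m t.1.1.1 && ~~ Nat.testbit (Nat.ldiff m (p2 t.1.1.1)) t.1.1.2].

Definition evalL (R : realType) (f : nat -> 'M[R]_4) (L : seq (int * nat * nat)) : 'M[R]_4 :=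
  \sum_(t <- L) (t.1.1)%:~R *: lie (Ta R t.1.2) (f t.2).

Lemma sum_pick (V : zmodType) (s : seq (nat * nat * nat * int))
   (H : 'I_8 -> 'I_8 -> nat * nat * nat * int -> V) :
  all (fun t => (t.1.1.1 < 8)%N && (t.1.1.2 < 8)%N) s ->
  \sum_(k < 8) \sum_(l < 8) \sum_(t <- s | (t.1.1.1 == k) && (t.1.1.2 == l)) H k l t =
  \sum_(t <- s) H (inord t.1.1.1) (inord t.1.1.2) t.
Proof.
move=> /allP hs.
under eq_bigr => k _ do (under eq_bigr => l _ do rewrite big_mkcond; rewrite exchange_big).
rewrite exchange_big big_seq [RHS]big_seq; apply: eq_bigr => t /hs /andP [hk hl].
rewrite (bigD1 (inord t.1.1.1)) //= [X in _ + X]big1 => [|k nk]; last first.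
  apply: big1 => l _; case: ifP => // /andP [/eqP ek _]; exfalso; move/negP: nk; apply.
  by apply/eqP/val_inj; rewrite /= inordK // ek.
rewrite addr0 (bigD1 (inord t.1.1.2)) //= [X in _ + X]big1 => [|l nl]; last first.
  case: ifP => // /andP [_ /eqP el]; exfalso; move/negP: nl; apply.
  by apply/eqP/val_inj; rewrite /= inordK // el.
by rewrite !inordK // !eqxx addr0.
Qed.

Lemma topE (R : realType) (phi : xform 'M[R]_4) m :
  TopG (@G R) phi (bs m) = evalL (fun n => phi (bs n)) (topL m).
Proof.
rewrite /TopG.
pose H := fun (k l : 'I_8) (t : nat * nat * nat * int) =>
  if k \in bs m then sgn R [set k] (bs m :\ k) *:
     ((t.2)%:~R *: lie (Ta R t.1.2) (Defs.interior l phi (bs m :\ k))) else 0.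
transitivity (\sum_(k < 8) \sum_(l < 8)
   \sum_(t <- Glist | (t.1.1.1 == k) && (t.1.1.2 == l)) H k l t).
  apply: eq_bigr => k _; apply: eq_bigr => l _.
  rewrite wedge_ebasis /H; case: ifP => _; last by rewrite big1.
  by rewrite /G lie_suml scaler_sumr; apply: eq_bigr => t _; rewrite lieZl.
rewrite sum_pick; last exact: Glist_ok.
rewrite /evalL /topL big_map big_filter [RHS]big_mkcond [LHS]big_seq [RHS]big_seq.
apply: eq_bigr => t /(allP Glist_ok) /andP [hk hl].
rewrite /H /Defs.interior !in_bs !inordK // setD1_bs inordK // in_bs inordK //.
case: (Nat.testbit m t.1.1.1) => //=.
case: (Nat.testbit _ t.1.1.2) => /=; first by rewrite lie0r !scaler0.
rewrite !set1_bs setU_bs !sgn_bs !inordK // lieZr !scalerA.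
congr (_ *: _); rewrite !intrM; ring.
Qed.

Lemma evalP_evalL (R : realType) (psi : nat -> 'M[R]_4) (f : nat -> seq (int * nat * nat))
   (L : seq (int * nat)) :
  evalP (fun n => evalL psi (f n)) L =
  evalL psi (flatten [seq [seq (s.1 * t.1.1, t.1.2, t.2) | t <- f s.2] | s <- L]).
Proof.
rewrite /evalP /evalL big_flatten big_map; apply: eq_bigr => s _.
rewrite big_map scaler_sumr; apply: eq_bigr => t _.
by rewrite scalerA intrM.
Qed.

Lemma evalL_evalP (R : realType) (psi : nat -> 'M[R]_4) (g : nat -> seq (int * nat))
   (L : seq (int * nat * nat)) :
  evalL (fun n => evalP psi (g n)) L =
  evalL psi (flatten [seq [seq (t.1.1 * s.1, t.1.2, s.2) | s <- g t.2] | t <- L]).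
Proof.
rewrite /evalP /evalL big_flatten big_map; apply: eq_bigr => t _.
rewrite big_map lie_sumr scaler_sumr; apply: eq_bigr => s _.
by rewrite lieZr scalerA intrM.
Qed.

Definition coefOf (L : seq (int * nat * nat)) (a J : nat) : int :=
  foldr (fun t acc => if (t.1.2 == a) && (t.2 == J) then t.1.1 + acc else acc) 0 L.

Lemma coefOfE L a J : coefOf L a J = \sum_(t <- L | (t.1.2 == a) && (t.2 == J)) t.1.1.
Proof. by elim: L => [|t L IH]; rewrite ?big_nil // big_cons /= IH. Qed.

Lemma intr_sum (R : realType) (I : Type) (s : seq I) (P : pred I) (F : I -> int) :
  (\sum_(i <- s | P i) F i)%:~R = \sum_(i <- s | P i) (F i)%:~R :> R.
Proof. exact: (big_morph (fun x : int => x%:~R : R) (@intrD R) (mulr0z 1)). Qed.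

Lemma evalL0 (R : realType) (psi : nat -> 'M[R]_4) (L : seq (int * nat * nat)) :
  all (fun t => coefOf L t.1.2 t.2 == 0) L -> evalL psi L = 0.
Proof.
move: {2}(size L) (leqnn (size L)) => n.
elim: n L => [|n IH] L hs hall.
  by case: L hs {hall} => // _; rewrite /evalL big_nil.
case: L hs hall => [_ _|t0 L' hs hall]; first by rewrite /evalL big_nil.
set L := t0 :: L' in hs hall *.
pose P := fun t : int * nat * nat => (t.1.2 == t0.1.2) && (t.2 == t0.2).
rewrite /evalL (bigID P) /=.
have -> : \sum_(t <- L | P t) (t.1.1)%:~R *: lie (Ta R t.1.2) (psi t.2) =
          (coefOf L t0.1.2 t0.2)%:~R *: lie (Ta R t0.1.2) (psi t0.2).
  rewrite coefOfE intr_sum scaler_suml; apply: eq_bigr => t /andP [/eqP -> /eqP ->].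
  by [].
have t0L : t0 \in L by rewrite inE eqxx.
rewrite (eqP (allP hall t0 t0L)) scale0r add0r -big_filter.
apply: IH.
  have hs' : (size L' <= n)%N by move: hs; rewrite /L /= ltnS.
  rewrite /L /= /P !eqxx /=; apply: leq_trans hs'.
  by rewrite size_filter count_size.
apply/allP => t; rewrite mem_filter => /andP [nP tin].
have -> : coefOf [seq x <- L | ~~ P x] t.1.2 t.2 = coefOf L t.1.2 t.2.
  rewrite !coefOfE big_filter_cond; apply: eq_bigl => s.
  case E: ((s.1.2 == t.1.2) && (s.2 == t.2)); last by rewrite andbF.
  rewrite andbT; move/andP: E => [/eqP e1 /eqP e2]; by rewrite /P e1 e2.
exact: (allP hall t tin).
Qed.

Definition chk (L1 L2 : seq (int * nat * nat)) : bool :=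
  let M := L1 ++ [seq (- t.1.1, t.1.2, t.2) | t <- L2] in
  all (fun t => coefOf M t.1.2 t.2 == 0) M.

Lemma evalL_eq (R : realType) (psi : nat -> 'M[R]_4) L1 L2 :
  chk L1 L2 -> evalL psi L1 = evalL psi L2.
Proof.
move=> /(evalL0 psi) H.
apply/eqP; rewrite -subr_eq0; apply/eqP; rewrite -{}H /evalL big_cat big_map /=.
congr (_ + _); rewrite -sumrN; apply: eq_bigr => t _.
by rewrite intrN scaleNr.
Qed.

Definition compPT (m : nat) : seq (int * nat * nat) :=
  flatten [seq [seq (s.1 * t.1.1, t.1.2, t.2) | t <- topL s.2] | s <- popL m].
Definition compTP (m : nat) : seq (int * nat * nat) :=
  flatten [seq [seq (t.1.1 * s.1, t.1.2, s.2) | s <- popL t.2] | t <- topL m].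

Lemma chk_all : all (fun m => chk (compPT m) (compTP m)) (iota 0 256).
Proof. vm_compute. reflexivity. Qed.

Lemma comm_bs (R : realType) (phi : xform 'M[R]_4) m : (m < 256)%N ->
  Pop (TopG (@G R) phi) (bs m) = TopG (@G R) (Pop phi) (bs m).
Proof.
move=> hm.
rewrite popE topE.
have -> : (fun n => TopG (@G R) phi (bs n)) = (fun n => evalL (fun n => phi (bs n)) (topL n)).
  by apply/funext => n; rewrite topE.
have -> : (fun n => Pop phi (bs n)) = (fun n => evalP (fun n => phi (bs n)) (popL n)).
  by apply/funext => n; rewrite popE.
rewrite evalP_evalL evalL_evalP; apply: evalL_eq.
have := allP chk_all m; rewrite mem_iota add0n hm; by apply.
Qed.


Definition gv (R : realType) (a b c : R) : 'M[R]_4 := a *: gi R + b *: gj R + c *: gk R.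

Lemma gvD (R : realType) (a b c a' b' c' : R) : gv a b c + gv a' b' c' = gv (a + a') (b + b') (c + c').
Proof. by rewrite /gv !scalerDl; rewrite addrACA -!addrA; congr (_ + _); rewrite addrCA addrA. Qed.
Lemma gvN (R : realType) (a b c : R) : - gv a b c = gv (- a) (- b) (- c).
Proof. by rewrite /gv !scaleNr !opprD. Qed.
Lemma gvZ (R : realType) (r a b c : R) : r *: gv a b c = gv (r * a) (r * b) (r * c).
Proof. by rewrite /gv !scalerDr !scalerA. Qed.
Lemma gv0 (R : realType) : 0 = gv 0 0 (0 : R).
Proof. by rewrite /gv !scale0r !addr0. Qed.
Lemma gv_eq (R : realType) (a b c a' b' c' : R) : a = a' -> b = b' -> c = c' -> gv a b c = gv a' b' c'.
Proof. by move=> -> -> ->. Qed.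

Lemma lie_gv (R : realType) (a b c a' b' c' : R) :
  lie (gv a b c) (gv a' b' c') =
  gv (2 * (b * c' - c * b')) (2 * (c * a' - a * c')) (2 * (a * b' - b * a')).
Proof.
apply/matrixP => i j; rewrite !mxE !big_ord_recr !big_ord0 /= !mxE.
case: i => [[|[|[|[|i]]]] Hi] //; case: j => [[|[|[|[|j]]]] Hj] //=; ring.
Qed.

Lemma der_rat (R : realType) (D0 a b H h1 : R) : D0 != 0 ->
  derive1 (fun t : R => (D0 + a*t + b*t^+2)^-1 * (H + h1*t)) 0 = h1/D0 - a*H/D0^+2.
Proof.
move=> hD.
pose g := (fun t : R => D0 + a*t + b*t^+2).
pose h := (fun t : R => H + h1*t).
have dg : is_derive (0:R) 1 g a.
  rewrite /g; apply: is_derive_eq.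
  rewrite add0r mul1r !scale0r !addr0 scaler0 addr0; exact: mulr1.
have dh : is_derive (0:R) 1 h h1.
  rewrite /h; apply: is_derive_eq.
  rewrite add0r mul1r; exact: mulr1.
have g0 : g 0 != 0 by rewrite /g mulr0 expr0n /= mulr0 !addr0.
have -> : (fun t : R => (D0 + a*t + b*t^+2)^-1 * (H + h1*t)) = (fun t => (g t)^-1) * h.
  by apply/funext => t.
rewrite derive1E deriveM; last 2 first.
- exact: derivableV.
- by [].
rewrite deriveV // !derive_val /g /h mulr0 expr0n /= mulr0 !addr0.
rewrite /GRing.scale /=. field. done.
Qed.

Definition Lc (R : realType) (l a : nat) (y : nat -> R) : R :=
  match l with
  | 4%N => match a with 0%N => - y 1%N | 1%N => - y 2%N | _ => - y 3%N end
  | 5%N => match a with 0%N => y 0%N | 1%N => - y 3%N | _ => y 2%N end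
  | 6%N => match a with 0%N => y 3%N | 1%N => y 0%N | _ => - y 1%N end
  | 7%N => match a with 0%N => - y 2%N | 1%N => y 1%N | _ => y 0%N end
  | _ => 0
  end.

Lemma BcE (R : realType) (eps : R) (l : 'I_8) (q : pt8 R) :
  Bc eps l q = (eps ^+ 2 + ynorm2 q)^-1 *:
    gv (Lc l 0 (ycoord q)) (Lc l 1 (ycoord q)) (Lc l 2 (ycoord q)).
Proof.
rewrite /Bc /gv /Lc; case: l => [[|[|[|[|[|[|[|[|l]]]]]]]] Hl] //=;
  by rewrite ?scaleNr ?scale0r ?addr0 ?scaler0.
Qed.

Definition dk (R : realType) (k : 'I_8) (c : nat) : R := if (4 + c == k)%N then 1 else 0.

Lemma ycoord_shift (R : realType) (p : pt8 R) (k : 'I_8) (t : R) (c : nat) : (c < 4)%N ->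
  ycoord (Defs.shift p k t) c = ycoord p c + dk R k c * t.
Proof.
move=> hc; rewrite /ycoord /Defs.shift /dk.
have -> : (inord (4 + c) == k) = (4 + c == k)%N.
  by rewrite -val_eqE /= inordK // -[8%N]/(4 + 4)%N ltn_add2l.
by case: ifP; rewrite ?mul1r ?mul0r.
Qed.

Lemma Lc_shift (R : realType) (p : pt8 R) (k : 'I_8) (t : R) (l a : nat) :
  Lc l a (ycoord (Defs.shift p k t)) = Lc l a (ycoord p) + t * Lc l a (dk R k).
Proof.
rewrite /Lc; case: l => [|[|[|[|[|[|[|[|l]]]]]]]]; rewrite ?mulr0 ?addr0 //;
case: a => [|[|a]]; rewrite !ycoord_shift //; ring.
Qed.

Definition Ay (R : realType) (p : pt8 R) (k : 'I_8) : R :=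
  2 * (ycoord p 0 * dk R k 0 + ycoord p 1 * dk R k 1 + ycoord p 2 * dk R k 2 + ycoord p 3 * dk R k 3).
Definition By (R : realType) (k : 'I_8) : R :=
  dk R k 0 ^+ 2 + dk R k 1 ^+ 2 + dk R k 2 ^+ 2 + dk R k 3 ^+ 2.

Lemma ynorm2_shift (R : realType) (eps : R) (p : pt8 R) (k : 'I_8) (t : R) :
  eps ^+ 2 + ynorm2 (Defs.shift p k t) = (eps ^+ 2 + ynorm2 p) + Ay p k * t + By R k * t ^+ 2.
Proof.
rewrite /ynorm2 !big_ord_recr !big_ord0 /= !ycoord_shift // /Ay /By; ring.
Qed.

Lemma D0_gt0 (R : realType) (eps : R) (p : pt8 R) : 0 < eps -> 0 < eps ^+ 2 + ynorm2 p.
Proof.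
move=> he; apply: ltr_wpDr; last by rewrite exprn_gt0.
by rewrite /ynorm2 sumr_ge0 // => c _; rewrite sqr_ge0.
Qed.

Lemma pdE (R : realType) (eps : R) (p : pt8 R) (k l : 'I_8) : 0 < eps ->
  pd k (Bc eps l) p =
  gv (Lc l 0 (dk R k) / (eps ^+ 2 + ynorm2 p) - Ay p k * Lc l 0 (ycoord p) / (eps ^+ 2 + ynorm2 p) ^+ 2)
     (Lc l 1 (dk R k) / (eps ^+ 2 + ynorm2 p) - Ay p k * Lc l 1 (ycoord p) / (eps ^+ 2 + ynorm2 p) ^+ 2)
     (Lc l 2 (dk R k) / (eps ^+ 2 + ynorm2 p) - Ay p k * Lc l 2 (ycoord p) / (eps ^+ 2 + ynorm2 p) ^+ 2).
Proof.
move=> he; have hD : eps ^+ 2 + ynorm2 p != 0 by rewrite gt_eqF // D0_gt0.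
apply/matrixP => i j; rewrite mxE.
set D0 := eps ^+ 2 + ynorm2 p.
have -> : (fun t => Bc eps l (Defs.shift p k t) i j) =
  (fun t => (D0 + Ay p k * t + By R k * t ^+ 2)^-1 *
    ((Lc l 0 (ycoord p) * gi R i j + Lc l 1 (ycoord p) * gj R i j + Lc l 2 (ycoord p) * gk R i j) +
     (Lc l 0 (dk R k) * gi R i j + Lc l 1 (dk R k) * gj R i j + Lc l 2 (dk R k) * gk R i j) * t)).
  apply/funext => t; rewrite BcE ynorm2_shift /gv !mxE !Lc_shift; ring.
rewrite der_rat // /gv !mxE; field.
done.
Qed.

Lemma Ta_gv (R : realType) : (Ta R 0 = gv 1 0 0) * (Ta R 1 = gv 0 1 0) * (Ta R 2 = gv 0 0 1).
Proof. by rewrite /Ta /gv !scale1r !scale0r ?addr0 ?add0r. Qed.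

Definition Gz (s : seq (nat * nat * nat * int)) (k l a : nat) : int :=
  foldr (fun t acc => if (t.1.1.1 == k) && (t.1.1.2 == l) && (t.1.2 == a) then t.2 + acc else acc) 0 s.

Lemma GE_gen (R : realType) (s : seq (nat * nat * nat * int)) (k l : nat) :
  all (fun t => (t.1.2 < 3)%N) s ->
  \sum_(t <- s | (t.1.1.1 == k) && (t.1.1.2 == l)) (t.2)%:~R *: Ta R t.1.2 =
  gv (Gz s k l 0)%:~R (Gz s k l 1)%:~R (Gz s k l 2)%:~R.
Proof.
elim: s => [|t s IH] /=; first by rewrite big_nil gv0.
move=> /andP [ha hs]; rewrite big_cons IH //.
case: ifP => P; rewrite /= ?P /=; last by [].
case: t P ha => [[[k' l'] a] sg] /= P ha.
case: a ha P => [|[|[|a]]] // _ P; rewrite Ta_gv gvZ gvD /=; apply: gv_eq;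
  rewrite ?intrD ?mulr1 ?mulr0 ?add0r //.
Qed.

Lemma GE (R : realType) (k l : 'I_8) :
  G R k l = gv (Gz Glist k l 0)%:~R (Gz Glist k l 1)%:~R (Gz Glist k l 2)%:~R.
Proof. by rewrite /G GE_gen. Qed.

Lemma FBE (R : realType) (eps : R) (p : pt8 R) (k l : 'I_8) : 0 < eps ->
  FB eps k l p = (2 * eps ^+ 2 / (eps ^+ 2 + ynorm2 p) ^+ 2) *: G R k l.
Proof.
move=> he; have hD : eps ^+ 2 + ynorm2 p != 0 by rewrite gt_eqF // D0_gt0.
Time rewrite /FB /dB /BwB !pdE // !BcE !gvZ !lie_gv !gvN !gvD !gvZ !gvD GE gvZ.
have hy : ynorm2 p = ycoord p 0 ^+ 2 + ycoord p 1 ^+ 2 + ycoord p 2 ^+ 2 + ycoord p 3 ^+ 2.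
  by rewrite /ynorm2 !big_ord_recr !big_ord0 /= add0r.
move: hD; rewrite hy => hD.
rewrite /Ay /dk.
apply: gv_eq;
case: k => [[|[|[|[|[|[|[|[|k]]]]]]]] Hk] //; case: l => [[|[|[|[|[|[|[|[|l]]]]]]]] Hl] //;
rewrite /=; field => //.
Qed.


Lemma Tphi_c (R : realType) (eps : R) (p : pt8 R) (phi : xform 'M[R]_4) K : 0 < eps ->
  Tphi eps p phi K = (2 * eps ^+ 2 / (eps ^+ 2 + ynorm2 p) ^+ 2) *: TopG (@G R) phi K.
Proof.
move=> he; rewrite /Tphi /TopG scaler_sumr; apply: eq_bigr => k _.
rewrite scaler_sumr; apply: eq_bigr => l _.
rewrite FBE // !wedge_ebasis; case: ifP => _; rewrite ?scaler0 //.
by rewrite lieZl !scalerA mulrC.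
Qed.

Lemma Pop_scale (R : realType) (c : R) (F : xform 'M[R]_4) I :
  Pop (fun K => c *: F K) I = c *: Pop F I.
Proof.
rewrite /Pop /hodge (wedge_lin (f := fun x : 'M[R]_4 => c *: x)).
- by rewrite scalerBr !scalerA mulrC [c * sgn _ _ _]mulrC.
- exact: scaler0.
- by move=> x y; rewrite scalerDr.
- by move=> r x; rewrite !scalerA mulrC.
Qed.

Lemma TopG0 (R : realType) K : TopG (@G R) (fun _ => 0) K = 0.
Proof.
rewrite /TopG; apply: big1 => k _; apply: big1 => l _.
rewrite wedge_ebasis /Defs.interior; case: ifP => _ //.
by case: ifP => _; rewrite ?scaler0 lie0r scaler0.
Qed.

Lemma in_g_gv (R : realType) (a b c : R) : in_g (gv a b c).
Proof. by exists a, b, c. Qed.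
Lemma in_g0 (R : realType) : in_g (0 : 'M[R]_4).
Proof. by rewrite gv0; apply: in_g_gv. Qed.
Lemma in_gD (R : realType) (A B : 'M[R]_4) : in_g A -> in_g B -> in_g (A + B).
Proof. by move=> [a [b [c ->]]] [a' [b' [c' ->]]]; rewrite -/(gv _ _ _) -/(gv a' b' c') gvD; apply: in_g_gv. Qed.
Lemma in_gZ (R : realType) (r : R) (A : 'M[R]_4) : in_g A -> in_g (r *: A).
Proof. by move=> [a [b [c ->]]]; rewrite -/(gv _ _ _) gvZ; apply: in_g_gv. Qed.
Lemma in_g_lie (R : realType) (A B : 'M[R]_4) : in_g A -> in_g B -> in_g (lie A B).
Proof. by move=> [a [b [c ->]]] [a' [b' [c' ->]]]; rewrite -/(gv _ _ _) -/(gv a' b' c') lie_gv; apply: in_g_gv. Qed.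
Lemma in_g_sum (R : realType) (I : Type) (s : seq I) (P : pred I) (F : I -> 'M[R]_4) :
  (forall i, P i -> in_g (F i)) -> in_g (\sum_(i <- s | P i) F i).
Proof.
move=> H; elim: s => [|x s IH]; first by rewrite big_nil; apply: in_g0.
rewrite big_cons; case: ifP => Px //; apply: in_gD => //; exact: H.
Qed.

Unset Implicit Arguments.

Theorem lemma2p2 (R : realType) (eps : R) (heps : 0 < eps)
  (p : pt8 R) (phi : xform 'M[R]_4) :
  in_L2plus_g phi -> in_L2plus_g (Tphi eps p phi).
Proof.
move=> [h1 [h2 h3]].
set c := 2 * eps ^+ 2 / (eps ^+ 2 + ynorm2 p) ^+ 2.
have TE : Tphi eps p phi = fun K => c *: TopG (@G R) phi K.
  by apply/funext => K; rewrite Tphi_c.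
split; [|split].
- move=> I hI; rewrite TE /TopG; apply/eqP; rewrite scaler_eq0; apply/orP; right; apply/eqP.
  apply: big1 => k _; apply: big1 => l _.
  rewrite wedge_ebasis; case: ifP => kI //.
  rewrite /Defs.interior; case: ifP => lJ; rewrite ?lie0r ?scaler0 //.
  rewrite h1; first by rewrite scaler0 lie0r scaler0.
  by move: hI; rewrite cardsU1 lJ (cardsD1 k I) kI.
- move=> I; rewrite TE; apply: in_gZ; rewrite /TopG.
  apply: in_g_sum => k _; apply: in_g_sum => l _.
  rewrite wedge_ebasis; case: ifP => _; last exact: in_g0.
  apply: in_gZ; apply: in_g_lie; first by rewrite GE; apply: in_g_gv.
  rewrite /Defs.interior; case: ifP => _; first exact: in_g0.
  by apply: in_gZ.
- move=> I; have [m hm ->] := bs_surj I.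
  change (Pop (Tphi eps p phi) (bs m) = 0).
  rewrite TE Pop_scale comm_bs //.
  have -> : Pop phi = fun _ => 0 by apply/funext => J; exact: h3.
  by rewrite TopG0 scaler0.
Qed.
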